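(* Let $\rho$, $V$ satisfy the standing assumptions below, let $Y(t)=(\varphi(t),\pi(t),q(t),p(t))\in C(\mathbb{R},\mathcal{E})$ be a solution of the system such that $q^3(t)=0$ for all $t\in\mathbb{R}$, and define $\bar q_1=\sup_{t\in\mathbb{R}}|\dot q(t)|$ and $\Theta$ as below. Then for every $\omega\in S_1=\{\omega\in\mathbb{R}^3:|\omega|=1\}$ with $|\omega^3|\ge\Theta$ and every $t\in\mathbb{R}$, $$\bar\pi(\omega,t)=\frac1{4\pi}\int\rho(y-q(\bar\tau))\,\frac{\omega\cdot\ddot q(\bar\tau)}{(1-\omega\cdot\dot q(\bar\tau))^2}\,dy,\qquad \bar\tau=t+\omega\cdot y.$$
   Context: Standing assumptions: $V\in C^2(\mathbb{R}^3)$ with $\lim_{|q|\to\infty}V(q)=\infty$; $\rho\in C_0^\infty(\mathbb{R}^3)$ real, radial, with $\rho(x)=0$ for $|x|\ge R_\rho$. The system is $\dot\varphi=\pi$, $\dot\pi=\Delta\varphi-\rho(x-q(t))$, $\dot q=p$, $\dot p=-\nabla V(q)+\int\varphi(x,t)\nabla\rho(x-q(t))dx$, with phase space $\mathcal{E}=\mathring H^1\oplus L^2\oplus\mathbb{R}^3\oplus\mathbb{R}^3$; solutions exist globally in $C(\mathbb{R},\mathcal{E})$ and $\sup_t|q^{(k)}(t)|<\infty$ for $k=0,1,2,3$. Define $$\bar\pi(\omega,t)=-\frac1{4\pi}\int\nabla\rho\big(y-q(\bar\tau)\big)\cdot\dot q(\bar\tau)\,dy,\qquad \bar\tau=t+\omega\cdot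 y.$$ $\Theta=0$ if $\bar q_1<1$, and $\Theta=\varepsilon+\sqrt{1-\bar q_1^{-2}}$ if $\bar q_1\ge1$, where $\varepsilon$ is a fixed number with $0<\varepsilon<1-\sqrt{1-\bar q_1^{-2}}$. *)

(* Defs.v *)
From Stdlib Require Import Reals.
From Coquelicot Require Import Coquelicot.
Open Scope R_scope.

Definition V3 := (R * R * R)%type.
Definition mk3 (a b c : R) : V3 := ((a, b), c).
Definition c1 (x : V3) : R := fst (fst x).
Definition c2 (x : V3) : R := snd (fst x).
Definition c3 (x : V3) : R := snd x.
Definition add3 (x y : V3) : V3 := mk3 (c1 x + c1 y) (c2 x + c2 y) (c3 x + c3 y).
Definition sub3 (x y : V3) : V3 := mk3 (c1 x - c1 y) (c2 x - c2 y) (c3 x - c3 y).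
Definition scal3 (s : R) (x : V3) : V3 := mk3 (s * c1 x) (s * c2 x) (s * c3 x).
Definition dot3 (x y : V3) : R := c1 x * c1 y + c2 x * c2 y + c3 x * c3 y.
Definition norm3 (x : V3) : R := sqrt (dot3 x x).

(* standard basis vector e_i, i = 0,1,2 (other indices give e_3) *)
Definition basis3 (i : nat) : V3 :=
  match i with 0 => mk3 1 0 0 | 1 => mk3 0 1 0 | _ => mk3 0 0 1 end.

(* partial derivative  d f / d x_{i+1} *)
Definition partial3 (i : nat) (f : V3 -> R) (x : V3) : R :=
  Derive (fun s => f (add3 x (scal3 s (basis3 i)))) 0.

Definition grad3 (f : V3 -> R) (x : V3) : V3 :=
  mk3 (partial3 0 f x) (partial3 1 f x) (partial3 2 f x).

Fixpoint Ck3 (k : nat) (f : V3 -> R) : Prop :=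
  (forall x : V3, continuous f x) /\
  match k with
  | O => True
  | S k' => forall i : nat, (i < 3)%nat ->
      (forall x, ex_derive (fun s => f (add3 x (scal3 s (basis3 i)))) 0)
      /\ Ck3 k' (partial3 i f)
  end.

Definition smooth3 (f : V3 -> R) : Prop := forall k, Ck3 k f.

Definition radial3 (f : V3 -> R) : Prop :=
  forall x y, norm3 x = norm3 y -> f x = f y.

Definition int3 (f : V3 -> R) : R :=
  RInt_gen (fun a =>
    RInt_gen (fun b =>
      RInt_gen (fun c => f (mk3 a b c))
        (Rbar_locally m_infty) (Rbar_locally p_infty))
      (Rbar_locally m_infty) (Rbar_locally p_infty))
    (Rbar_locally m_infty) (Rbar_locally p_infty).

Definition qbar1 (dq : R -> V3) : R :=
  real (Lub_Rbar (fun r => exists t, r = norm3 (dq t))).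

Definition Theta (qb1 eps : R) : R :=
  if Rlt_dec qb1 1 then 0 else eps + sqrt (1 - / (qb1 ^ 2)).

Definition pibar (rho : V3 -> R) (q dq : R -> V3) (omega : V3) (t : R) : R :=
  - / (4 * PI) *
  int3 (fun y => let tau := t + dot3 omega y in
                 dot3 (grad3 rho (sub3 y (q tau))) (dq tau)).

(* Main.v *)
Require Import Defs.
From Stdlib Require Import Reals Lra.
From Coquelicot Require Import Coquelicot.
From Stdlib Require Import Classical ClassicalEpsilon FunctionalExtensionality.
Open Scope R_scope.


Lemma ball_R (x e y : R) : ball x e y <-> Rabs (y - x) < e.
Proof. split; intro H; exact H. Qed.

Lemma cont_slice {X : UniformSpace} (f : X -> R -> R) (y : X) (t : R) :
  continuous (fun p : X * R => f (fst p) (snd p)) (y, t) ->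
  continuous (f y) t.
Proof.
  intro H. apply (continuous_comp_2 (fun _ : R => y) (fun s => s) f t).
  apply continuous_const. apply continuous_id. exact H.
Qed.

Lemma RInt_param_cont_le {X : UniformSpace} (f : X -> R -> R) (lo hi : R) (x : X) :
  lo <= hi ->
  (forall x' t, continuous (fun p : X * R => f (fst p) (snd p)) (x', t)) ->
  continuous (fun y => RInt (f y) lo hi) x.
Proof.
  intros Hlh Hc. apply filterlim_locally. intros eps.
  set (e' := eps / (2 * (hi - lo + 1))).
  assert (He' : 0 < e'). { unfold e'. apply Rdiv_lt_0_compat. apply cond_pos. lra. }
  assert (Hd : forall t, exists d : posreal, forall y s, ball x d y -> ball t d s ->
             Rabs (f y s - f x t) < e').
  { intro t. specialize (Hc x t). apply filterlim_locally with (eps := mkposreal e' He') in Hc.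
    destruct Hc as [d Hd]. exists d. intros y s H1 H2.
    apply (Hd (y, s)). split; assumption. }
  set (delta := fun t => proj1_sig (constructive_indefinite_description _ (Hd t))).
  assert (Hdelta : forall t y s, ball x (delta t) y -> ball t (delta t) s ->
             Rabs (f y s - f x t) < e').
  { intros t. unfold delta. destruct (constructive_indefinite_description _ (Hd t)) as [d Hd']. exact Hd'. }
  destruct (compactness_value_1d lo hi delta) as [d Hcomp].
  exists d. intros y Hy.
  assert (Hb : forall c, lo <= c <= hi -> Rabs (f y c - f x c) <= 2 * e').
  { intros c Hc'. destruct (classic (Rabs (f y c - f x c) <= 2 * e')) as [H|H]; [exact H|].
    exfalso. apply (Hcomp c Hc'). intros [t [Ht [Hct Hdt]]].
    apply H.
    assert (H1 : Rabs (f y c - f x t) < e').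
    { apply Hdelta. apply ball_le with d; assumption. apply ball_R. exact Hct. }
    assert (H2 : Rabs (f x c - f x t) < e').
    { apply Hdelta. apply ball_center. apply ball_R. exact Hct. }
    replace (f y c - f x c) with ((f y c - f x t) - (f x c - f x t)) by ring.
    eapply Rle_trans. apply Rabs_triang_inv2 || apply Rabs_triang.
    rewrite Rabs_Ropp. lra. }
  assert (Hex : forall z, ex_RInt (f z) lo hi).
  { intro z. apply (@ex_RInt_continuous R_CompleteNormedModule). intros s _. apply cont_slice. apply Hc. }
  apply ball_R.
  replace (RInt (f y) lo hi - RInt (f x) lo hi) with (RInt (fun c => f y c - f x c) lo hi).
  2:{ apply (RInt_minus (f y) (f x)); auto. }
  eapply Rle_lt_trans. apply abs_RInt_le_const with (M := 2 * e'). exact Hlh.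
  apply (ex_RInt_minus (f y) (f x)); auto.
  exact Hb.
  unfold e'. apply Rle_lt_trans with (eps * ((hi - lo) / (hi - lo + 1))).
  right. field. lra.
  pose proof (cond_pos eps).
  assert ((hi - lo) / (hi - lo + 1) < 1). { apply Rmult_lt_reg_r with (hi - lo + 1). lra. field_simplify; lra. }
  nra.
Qed.
Lemma RInt_zero_on (f : R -> R) a b : (forall x, Rmin a b < x < Rmax a b -> f x = 0) -> RInt f a b = 0.
Proof.
  intro H. rewrite (RInt_ext f (fun _ => 0)) by exact H.
  rewrite RInt_const. change (Rmult (b - a) 0 = 0). ring.
Qed.

Lemma exRc (f : R -> R) a b : (forall t, continuous f t) -> ex_RInt f a b.
Proof. intro H. apply (@ex_RInt_continuous R_CompleteNormedModule). intros; apply H. Qed.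

Lemma RInt_gen_cs (f : R -> R) (L : R) : 0 <= L -> (forall t, continuous f t) ->
  (forall t, L <= Rabs t -> f t = 0) ->
  RInt_gen f (Rbar_locally m_infty) (Rbar_locally p_infty) = RInt f (-L) L.
Proof.
  intros HL Hc Hz. apply is_RInt_gen_unique.
  unfold is_RInt_gen, filterlimi, filter_le, filtermapi. intros P HP.
  apply Filter_prod with (Q := fun a => a < -L) (R := fun b => L < b).
  exists (-L). auto. exists L. auto.
  intros a b Ha Hb. exists (RInt f (-L) L). split; [|apply locally_singleton; exact HP].
  simpl.
  replace (RInt f (-L) L) with (RInt f a b). apply RInt_correct. apply exRc; auto.
  rewrite <- (RInt_Chasles f a (-L) b) by (apply exRc; auto).
  rewrite <- (RInt_Chasles f (-L) L b) by (apply exRc; auto).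
  rewrite (RInt_zero_on f a (-L)). rewrite (RInt_zero_on f L b).
  change (0 + (RInt f (-L) L + 0) = RInt f (-L) L). ring.
  intros x Hx. apply Hz. rewrite Rmin_left in Hx by lra. rewrite Rmax_right in Hx by lra.
  rewrite Rabs_right; lra.
  intros x Hx. apply Hz. rewrite Rmin_left in Hx by lra. rewrite Rmax_right in Hx by lra.
  rewrite Rabs_left; lra.
Qed.

Definition I3 (L : R) (f : V3 -> R) : R :=
  RInt (fun a => RInt (fun b => RInt (fun c => f (mk3 a b c)) (-L) L) (-L) L) (-L) L.
Definition box_supp (L : R) (f : V3 -> R) : Prop :=
  forall a b c, L <= Rabs a \/ L <= Rabs b \/ L <= Rabs c -> f (mk3 a b c) = 0.
Definition cont3 (f : V3 -> R) : Prop := forall y : V3, continuous f y.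

Lemma cont3_z (f : V3 -> R) : cont3 f -> forall z : (R * R) * R,
  continuous (fun z : (R * R) * R => f (mk3 (fst (fst z)) (snd (fst z)) (snd z))) z.
Proof.
  intros H z. apply continuous_ext with f. intros [[u v] w]. reflexivity. apply H.
Qed.

Lemma cont3_c (f : V3 -> R) a b c : cont3 f -> continuous (fun c => f (mk3 a b c)) c.
Proof.
  intro H. apply (cont_slice (fun (p : R * R) c => f (mk3 (fst p) (snd p) c)) (a, b) c).
  apply (cont3_z f H).
Qed.

Definition G2 (L : R) (f : V3 -> R) (a b : R) : R := RInt (fun c => f (mk3 a b c)) (-L) L.

Lemma G2_cont (L : R) (f : V3 -> R) : 0 <= L -> cont3 f -> forall z : R * R,
  continuous (fun z : R * R => G2 L f (fst z) (snd z)) z.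
Proof.
  intros HL H z. unfold G2.
  apply (RInt_param_cont_le (fun (p : R * R) c => f (mk3 (fst p) (snd p) c))). lra.
  intros x' t. apply (cont3_z f H).
Qed.

Lemma G2_cont_b (L : R) (f : V3 -> R) a b : 0 <= L -> cont3 f -> continuous (G2 L f a) b.
Proof.
  intros HL H. apply (cont_slice (G2 L f) a b). apply G2_cont; auto.
Qed.

Lemma G1_cont (L : R) (f : V3 -> R) a : 0 <= L -> cont3 f ->
  continuous (fun a => RInt (G2 L f a) (-L) L) a.
Proof.
  intros HL H. apply (RInt_param_cont_le (G2 L f)). lra.
  intros x' t. apply G2_cont; auto.
Qed.

Lemma int3_I3 (L : R) (f : V3 -> R) : 0 <= L -> cont3 f -> box_supp L f -> int3 f = I3 L f.
Proof.
  intros HL Hc Hs. unfold int3, I3.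
  transitivity (RInt_gen (fun a => RInt_gen (fun b => G2 L f a b)
     (Rbar_locally m_infty) (Rbar_locally p_infty)) (Rbar_locally m_infty) (Rbar_locally p_infty)).
  { f_equal. apply functional_extensionality. intro a. f_equal. apply functional_extensionality. intro b.
    unfold G2. apply RInt_gen_cs; auto. intro t. apply cont3_c; auto. }
  transitivity (RInt_gen (fun a => RInt (G2 L f a) (-L) L) (Rbar_locally m_infty) (Rbar_locally p_infty)).
  { f_equal. apply functional_extensionality. intro a. apply RInt_gen_cs; auto.
    intro t. apply G2_cont_b; auto.
    intros t Ht. unfold G2. apply RInt_zero_on. intros. apply Hs. auto. }
  apply RInt_gen_cs; auto. intro t. apply G1_cont; auto.
  intros t Ht. apply RInt_zero_on. intros. unfold G2. apply RInt_zero_on. intros. apply Hs. auto.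
Qed.

Lemma I3_plus (L : R) (f g : V3 -> R) : 0 <= L -> cont3 f -> cont3 g ->
  I3 L (fun y => f y + g y) = I3 L f + I3 L g.
Proof.
  intros HL Hf Hg. unfold I3.
  assert (E1 : forall a b, RInt (fun c => f (mk3 a b c) + g (mk3 a b c)) (-L) L
        = G2 L f a b + G2 L g a b).
  { intros a b. unfold G2. apply (RInt_plus (fun c => f (mk3 a b c)) (fun c => g (mk3 a b c)));
    apply exRc; intro; apply cont3_c; auto. }
  transitivity (RInt (fun a => RInt (fun b => G2 L f a b + G2 L g a b) (-L) L) (-L) L).
  { apply RInt_ext. intros a _. apply RInt_ext. intros b _. apply E1. }
  assert (E2 : forall a, RInt (fun b => G2 L f a b + G2 L g a b) (-L) L
        = RInt (G2 L f a) (-L) L + RInt (G2 L g a) (-L) L).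
  { intros a. apply (RInt_plus (G2 L f a) (G2 L g a));
    apply exRc; intro; apply G2_cont_b; auto. }
  transitivity (RInt (fun a => RInt (G2 L f a) (-L) L + RInt (G2 L g a) (-L) L) (-L) L).
  { apply RInt_ext. intros a _. apply E2. }
  apply (RInt_plus (fun a => RInt (G2 L f a) (-L) L) (fun a => RInt (G2 L g a) (-L) L));
    apply exRc; intro; apply G1_cont; auto.
Qed.

Lemma RInt_param_deriv (f df : R -> R -> R) lo hi x :
  (forall u t, is_derive (fun u => f u t) u (df u t)) ->
  (forall z : R * R, continuous (fun z => df (fst z) (snd z)) z) ->
  (forall u t, continuous (f u) t) ->
  is_derive (fun u => RInt (f u) lo hi) x (RInt (df x) lo hi).
Proof.
  intros Hd Hc Hf.
  assert (ED : forall u t, Derive (fun z => f z t) u = df u t).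
  { intros. apply is_derive_unique. apply Hd. }
  replace (RInt (df x) lo hi) with (RInt (fun t => Derive (fun u => f u t) x) lo hi).
  2:{ apply RInt_ext. intros. apply ED. }
  apply (is_derive_RInt_param f lo hi x).
  - apply filter_forall. intros u t _. eexists. apply Hd.
  - intros t _. apply continuity_2d_pt_ext with df. intros; symmetry; apply ED.
    apply continuity_2d_pt_filterlim. apply Hc.
  - apply filter_forall. intros u. apply exRc. apply Hf.
Qed.

Lemma RInt_zero_all (f : R -> R) a b : (forall x, f x = 0) -> RInt f a b = 0.
Proof. intro H. apply RInt_zero_on. intros; apply H. Qed.

Lemma RInt_deriv_zero (h dh : R -> R) L : (forall x, is_derive h x (dh x)) ->
  (forall x, continuous dh x) -> h (-L) = 0 -> h L = 0 -> RInt dh (-L) L = 0.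
Proof.
  intros Hd Hc H1 H2. apply is_RInt_unique.
  replace 0 with (minus (h L) (h (-L))). apply (@is_RInt_derive R_CompleteNormedModule); intros; auto.
  rewrite H1, H2. change (0 - 0 = 0). ring.
Qed.

Lemma cont_pair {U V W : UniformSpace} (f : U -> V) (g : U -> W) x :
  continuous f x -> continuous g x -> continuous (fun x => (f x, g x)) x.
Proof.
  intros Hf Hg. apply (continuous_comp_2 f g (fun u v => (u, v))); auto.
  apply continuous_ext with (fun z => z). intros [u v]; reflexivity. apply continuous_id.
Qed.

Lemma cont_mk3 {U : UniformSpace} (A B C : U -> R) x :
  continuous A x -> continuous B x -> continuous C x ->
  continuous (fun x => mk3 (A x) (B x) (C x)) x.
Proof. intros; unfold mk3; repeat apply cont_pair; auto. Qed.

Lemma cont3_comp {U : UniformSpace} (g : V3 -> R) (A B C : U -> R) x : cont3 g ->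
  continuous A x -> continuous B x -> continuous C x ->
  continuous (fun x => g (mk3 (A x) (B x) (C x))) x.
Proof.
  intros Hg HA HB HC. apply (continuous_comp (fun x => mk3 (A x) (B x) (C x)) g).
  apply cont_mk3; auto. apply Hg.
Qed.

Lemma div_c (L : R) (f fc : V3 -> R) : 0 <= L -> cont3 f -> cont3 fc -> box_supp L f ->
  (forall a b c, is_derive (fun s => f (mk3 a b s)) c (fc (mk3 a b c))) ->
  I3 L fc = 0.
Proof.
  intros HL Hf Hfc Hs Hd. unfold I3. apply RInt_zero_all. intro a. apply RInt_zero_all. intro b.
  apply (RInt_deriv_zero (fun s => f (mk3 a b s))). auto.
  intro; apply cont3_c; auto.
  apply Hs. right; right. rewrite Rabs_Ropp, Rabs_right; lra.
  apply Hs. right; right. rewrite Rabs_right; lra.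
Qed.

Lemma div_b (L : R) (f fb : V3 -> R) : 0 <= L -> cont3 f -> cont3 fb -> box_supp L f ->
  (forall a b c, is_derive (fun s => f (mk3 a s c)) b (fb (mk3 a b c))) ->
  I3 L fb = 0.
Proof.
  intros HL Hf Hfb Hs Hd. unfold I3. apply RInt_zero_all. intro a.
  change (RInt (G2 L fb a) (-L) L = 0).
  apply (RInt_deriv_zero (G2 L f a)).
  - intro b. unfold G2.
    apply (RInt_param_deriv (fun u t => f (mk3 a u t)) (fun u t => fb (mk3 a u t))).
    + intros; apply Hd.
    + intros [u v]. apply cont3_comp; auto. apply continuous_const.
      apply continuous_fst. apply continuous_snd.
    + intros; apply cont3_c; auto.
  - intro; apply G2_cont_b; auto.
  - unfold G2. apply RInt_zero_all. intro; apply Hs. right; left. rewrite Rabs_Ropp, Rabs_right; lra.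
  - unfold G2. apply RInt_zero_all. intro; apply Hs. right; left. rewrite Rabs_right; lra.
Qed.

Lemma div_a (L : R) (f fa : V3 -> R) : 0 <= L -> cont3 f -> cont3 fa -> box_supp L f ->
  (forall a b c, is_derive (fun s => f (mk3 s b c)) a (fa (mk3 a b c))) ->
  I3 L fa = 0.
Proof.
  intros HL Hf Hfa Hs Hd.
  assert (HG : forall u t, is_derive (fun u => G2 L f u t) u (G2 L fa u t)).
  { intros u b. unfold G2.
    apply (RInt_param_deriv (fun u t => f (mk3 u b t)) (fun u t => fa (mk3 u b t))).
    + intros; apply Hd.
    + intros [u' v]. apply cont3_comp; auto. apply continuous_fst. apply continuous_const.
      apply continuous_snd.
    + intros; apply cont3_c; auto. }
  unfold I3. change (RInt (fun a => RInt (G2 L fa a) (-L) L) (-L) L = 0).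
  apply (RInt_deriv_zero (fun a => RInt (G2 L f a) (-L) L)).
  - intro a. apply (RInt_param_deriv (G2 L f) (G2 L fa)); auto.
    apply G2_cont; auto. intros; apply G2_cont_b; auto.
  - intro; apply G1_cont; auto.
  - apply RInt_zero_all. intro b. unfold G2. apply RInt_zero_all. intro; apply Hs. left. rewrite Rabs_Ropp, Rabs_right; lra.
  - apply RInt_zero_all. intro b. unfold G2. apply RInt_zero_all. intro; apply Hs. left. rewrite Rabs_right; lra.
Qed.
Definition HDer (f : V3 -> R) : Prop :=
  forall z i, (i < 3)%nat -> ex_derive (fun s => f (add3 z (scal3 s (basis3 i)))) 0.

Lemma shift_deriv (h : R -> R) (k : R -> R) a l :
  is_derive h 0 l -> (forall u, k u = h (u - a)) -> is_derive k a l.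
Proof.
  intros H E. apply is_derive_Reals. apply is_derive_Reals in H.
  intros eps Heps. destruct (H eps Heps) as [d Hd]. exists d. intros x Hx Hx'.
  rewrite !E. replace (a + x - a) with (0 + x) by ring. replace (a - a) with 0 by ring.
  apply Hd; auto.
Qed.

Lemma coord_d0 f a b c : HDer f -> is_derive (fun u => f (mk3 u b c)) a (partial3 0 f (mk3 a b c)).
Proof.
  intro H. apply shift_deriv with (fun s => f (add3 (mk3 a b c) (scal3 s (basis3 0)))).
  apply Derive_correct. apply H. auto.
  intro u. f_equal. unfold add3, scal3, basis3, mk3, Defs.c1, Defs.c2, Defs.c3; simpl. f_equal; [f_equal|]; ring.
Qed.
Lemma coord_d1 f a b c : HDer f -> is_derive (fun u => f (mk3 a u c)) b (partial3 1 f (mk3 a b c)).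
Proof.
  intro H. apply shift_deriv with (fun s => f (add3 (mk3 a b c) (scal3 s (basis3 1)))).
  apply Derive_correct. apply H. auto.
  intro u. f_equal. unfold add3, scal3, basis3, mk3, Defs.c1, Defs.c2, Defs.c3; simpl. f_equal; [f_equal|]; ring.
Qed.
Lemma coord_d2 f a b c : HDer f -> is_derive (fun u => f (mk3 a b u)) c (partial3 2 f (mk3 a b c)).
Proof.
  intro H. apply shift_deriv with (fun s => f (add3 (mk3 a b c) (scal3 s (basis3 2)))).
  apply Derive_correct. apply H. auto.
  intro u. f_equal. unfold add3, scal3, basis3, mk3, Defs.c1, Defs.c2, Defs.c3; simpl. f_equal; [f_equal|]; ring.
Qed.

Lemma mvt_step (phi dphi : R -> R) A B : (forall u, is_derive phi u (dphi u)) ->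
  exists xi, Rabs (xi - A) <= Rabs (B - A) /\ phi B - phi A = dphi xi * (B - A).
Proof.
  intro H. destruct (MVT_gen phi A B dphi) as [xi [Hxi E]].
  intros; apply H.
  intros. apply continuity_pt_filterlim. apply (ex_derive_continuous phi). eexists; apply H.
  exists xi. split; auto. unfold Rmin, Rmax in Hxi. destruct (Rle_dec A B);
  unfold Rabs; repeat destruct Rcase_abs; lra.
Qed.

Lemma est1 q p r d e1 e2 : Rabs (q - p) < e1 -> Rabs (r - d) < e2 -> e2 <= 1 ->
  Rabs (q * r - p * d) <= e1 * (Rabs d + 1) + Rabs p * e2.
Proof.
  intros H1 H2 H3.
  replace (q * r - p * d) with ((q - p) * r + p * (r - d)) by ring.
  eapply Rle_trans. apply Rabs_triang. rewrite !Rabs_mult.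
  assert (Rabs r <= Rabs d + 1).
  { replace r with (d + (r - d)) by ring. eapply Rle_trans. apply Rabs_triang. lra. }
  pose proof (Rabs_pos (q - p)). pose proof (Rabs_pos p). pose proof (Rabs_pos r).
  pose proof (Rabs_pos (r - d)).
  apply Rplus_le_compat. apply Rmult_le_compat; lra. apply Rmult_le_compat_l; lra.
Qed.

Lemma ball3 (P : V3) e x y w : Rabs (x - Defs.c1 P) < e -> Rabs (y - Defs.c2 P) < e -> Rabs (w - Defs.c3 P) < e ->
  ball P e (mk3 x y w).
Proof. destruct P as [[p1 p2] p3]. unfold Defs.c1, Defs.c2, Defs.c3, mk3; simpl. intros. split; [split|]; assumption. Qed.

Lemma Rabs_triang3 x y z : Rabs (x + y + z) <= Rabs x + Rabs y + Rabs z.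
Proof. eapply Rle_trans. apply Rabs_triang. pose proof (Rabs_triang x y). lra. Qed.

Lemma chain3 (f : V3 -> R) (HD : HDer f)
  (HC : forall i z, (i < 3)%nat -> continuous (partial3 i f) z)
  g1 g2 g3 d1 d2 d3 s :
  is_derive g1 s d1 -> is_derive g2 s d2 -> is_derive g3 s d3 ->
  is_derive (fun s => f (mk3 (g1 s) (g2 s) (g3 s))) s
   (partial3 0 f (mk3 (g1 s) (g2 s) (g3 s)) * d1 + partial3 1 f (mk3 (g1 s) (g2 s) (g3 s)) * d2
    + partial3 2 f (mk3 (g1 s) (g2 s) (g3 s)) * d3).
Proof.
  intros H1 H2 H3.
  set (P := mk3 (g1 s) (g2 s) (g3 s)).
  set (p1 := partial3 0 f P). set (p2 := partial3 1 f P). set (p3 := partial3 2 f P).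
  apply is_derive_Reals. intros eps Heps.
  set (Gm := 1 + Rabs d1 + Rabs d2 + Rabs d3 + Rabs p1 + Rabs p2 + Rabs p3).
  assert (HG : 1 <= Gm).
  { unfold Gm. pose proof (Rabs_pos d1). pose proof (Rabs_pos d2). pose proof (Rabs_pos d3).
    pose proof (Rabs_pos p1). pose proof (Rabs_pos p2). pose proof (Rabs_pos p3). lra. }
  set (e1 := eps / (4 * Gm)). set (e2 := Rmin 1 (eps / (8 * Gm))).
  assert (He1 : 0 < e1). { unfold e1. apply Rdiv_lt_0_compat; lra. }
  assert (He2 : 0 < e2). { unfold e2. apply Rmin_pos. lra. apply Rdiv_lt_0_compat; lra. }
  assert (Hk : forall i, (i < 3)%nat -> exists eta : posreal, forall z, ball P eta z ->
             Rabs (partial3 i f z - partial3 i f P) < e1).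
  { intros i Hi. pose proof (HC i P Hi) as Hc.
    apply filterlim_locally with (eps := mkposreal e1 He1) in Hc. destruct Hc as [eta Heta].
    exists eta. intros z Hz. apply (Heta z Hz). }
  destruct (Hk 0%nat) as [eta0 K0]; auto.
  destruct (Hk 1%nat) as [eta1 K1]; auto.
  destruct (Hk 2%nat) as [eta2 K2]; auto.
  set (eta := Rmin eta0 (Rmin eta1 eta2)).
  assert (Heta : 0 < eta).
  { unfold eta. repeat apply Rmin_pos; apply cond_pos. }
  assert (Hg : forall g d, is_derive g s d -> exists del : posreal, forall h, Rabs h < del ->
            Rabs (g (s + h) - g s) < eta).
  { intros g d Hgd. pose proof (ex_derive_continuous g s (ex_intro _ d Hgd)) as Hc.
    apply filterlim_locally with (eps := mkposreal eta Heta) in Hc. destruct Hc as [del Hdel].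
    exists del. intros h Hh. apply (Hdel (s + h)). apply ball_R. replace (s + h - s) with h by ring.
    exact Hh. }
  destruct (Hg g1 d1 H1) as [c1' C1]. destruct (Hg g2 d2 H2) as [c2' C2].
  destruct (Hg g3 d3 H3) as [c3' C3].
  apply is_derive_Reals in H1. apply is_derive_Reals in H2. apply is_derive_Reals in H3.
  destruct (H1 e2 He2) as [l1 D1]. destruct (H2 e2 He2) as [l2 D2]. destruct (H3 e2 He2) as [l3 D3].
  assert (Hdel : 0 < Rmin (Rmin c1' (Rmin c2' c3')) (Rmin l1 (Rmin l2 l3))).
  { repeat apply Rmin_pos; apply cond_pos. }
  exists (mkposreal _ Hdel). simpl. intros h Hh0 Hh.
  assert (Hc1 : Rabs h < c1'). { eapply Rlt_le_trans. exact Hh. repeat (eapply Rle_trans; [apply Rmin_l|]); lra. }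
  assert (Hc2 : Rabs h < c2'). { eapply Rlt_le_trans. exact Hh.
    eapply Rle_trans. apply Rmin_l. eapply Rle_trans. apply Rmin_r. apply Rmin_l. }
  assert (Hc3 : Rabs h < c3'). { eapply Rlt_le_trans. exact Hh.
    eapply Rle_trans. apply Rmin_l. eapply Rle_trans. apply Rmin_r. apply Rmin_r. }
  assert (Hl1 : Rabs h < l1). { eapply Rlt_le_trans. exact Hh.
    eapply Rle_trans. apply Rmin_r. apply Rmin_l. }
  assert (Hl2 : Rabs h < l2). { eapply Rlt_le_trans. exact Hh.
    eapply Rle_trans. apply Rmin_r. eapply Rle_trans. apply Rmin_r. apply Rmin_l. }
  assert (Hl3 : Rabs h < l3). { eapply Rlt_le_trans. exact Hh.
    eapply Rle_trans. apply Rmin_r. eapply Rle_trans. apply Rmin_r. apply Rmin_r. }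
  specialize (C1 h Hc1). specialize (C2 h Hc2). specialize (C3 h Hc3).
  specialize (D1 h Hh0 Hl1). specialize (D2 h Hh0 Hl2). specialize (D3 h Hh0 Hl3).
  set (A1 := g1 s) in *. set (A2 := g2 s) in *. set (A3 := g3 s) in *.
  set (B1 := g1 (s + h)) in *. set (B2 := g2 (s + h)) in *. set (B3 := g3 (s + h)) in *.
  destruct (mvt_step (fun u => f (mk3 u B2 B3)) (fun u => partial3 0 f (mk3 u B2 B3)) A1 B1)
    as [x1 [Hx1 E1]]. { intro; apply coord_d0; auto. }
  destruct (mvt_step (fun u => f (mk3 A1 u B3)) (fun u => partial3 1 f (mk3 A1 u B3)) A2 B2)
    as [x2 [Hx2 E2]]. { intro; apply coord_d1; auto. }
  destruct (mvt_step (fun u => f (mk3 A1 A2 u)) (fun u => partial3 2 f (mk3 A1 A2 u)) A3 B3)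
    as [x3 [Hx3 E3]]. { intro; apply coord_d2; auto. }
  simpl in E1, E2, E3.
  set (q1 := partial3 0 f (mk3 x1 B2 B3)) in *.
  set (q2 := partial3 1 f (mk3 A1 x2 B3)) in *.
  set (q3 := partial3 2 f (mk3 A1 A2 x3)) in *.
  assert (EF : f (mk3 B1 B2 B3) - f (mk3 A1 A2 A3) = q1 * (B1 - A1) + q2 * (B2 - A2) + q3 * (B3 - A3)).
  { lra. }
  replace ((f (mk3 B1 B2 B3) - f (mk3 A1 A2 A3)) / h - (p1 * d1 + p2 * d2 + p3 * d3)) with
    ((q1 * ((B1 - A1) / h) - p1 * d1) + (q2 * ((B2 - A2) / h) - p2 * d2) + (q3 * ((B3 - A3) / h) - p3 * d3)).
  2:{ rewrite EF. field. exact Hh0. }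
  assert (Heta0 : eta <= eta0) by apply Rmin_l.
  assert (Heta1 : eta <= eta1). { eapply Rle_trans. apply Rmin_r. apply Rmin_l. }
  assert (Heta2 : eta <= eta2). { eapply Rle_trans. apply Rmin_r. apply Rmin_r. }
  assert (Q1 : Rabs (q1 - p1) < e1).
  { apply K0. apply ball_le with eta; auto. apply ball3; unfold P, mk3, Defs.c1, Defs.c2, Defs.c3; simpl; lra. }
  assert (Q2 : Rabs (q2 - p2) < e1).
  { apply K1. apply ball_le with eta; auto. apply ball3; unfold P, mk3, Defs.c1, Defs.c2, Defs.c3; simpl.
    unfold Rminus at 1; rewrite Rplus_opp_r, Rabs_R0; lra. lra. lra. }
  assert (Q3 : Rabs (q3 - p3) < e1).
  { apply K2. apply ball_le with eta; auto. apply ball3; unfold P, mk3, Defs.c1, Defs.c2, Defs.c3; simpl.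
    unfold Rminus at 1; rewrite Rplus_opp_r, Rabs_R0; lra.
    unfold Rminus at 1; rewrite Rplus_opp_r, Rabs_R0; lra. lra. }
  assert (He21 : e2 <= 1) by apply Rmin_l.
  pose proof (est1 q1 p1 ((B1 - A1) / h) d1 e1 e2 Q1 D1 He21).
  pose proof (est1 q2 p2 ((B2 - A2) / h) d2 e1 e2 Q2 D2 He21).
  pose proof (est1 q3 p3 ((B3 - A3) / h) d3 e1 e2 Q3 D3 He21).
  eapply Rle_lt_trans. apply Rabs_triang3.
  assert (X1 : e1 * (Rabs d1 + 1) + e1 * (Rabs d2 + 1) + e1 * (Rabs d3 + 1) <= 3 * eps / 4).
  { replace (3 * eps / 4) with (e1 * (3 * Gm)) by (unfold e1; field; lra).
    pose proof (Rabs_pos p1). pose proof (Rabs_pos p2). pose proof (Rabs_pos p3).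
    pose proof (Rabs_pos d1). pose proof (Rabs_pos d2). pose proof (Rabs_pos d3).
    rewrite <- !Rmult_plus_distr_l. apply Rmult_le_compat_l. lra. unfold Gm. lra. }
  assert (X2 : Rabs p1 * e2 + Rabs p2 * e2 + Rabs p3 * e2 <= eps / 8).
  { assert (e2 <= eps / (8 * Gm)) by apply Rmin_r.
    replace (eps / 8) with (Gm * (eps / (8 * Gm))) by (field; lra).
    rewrite <- !Rmult_plus_distr_r. apply Rmult_le_compat. 
    pose proof (Rabs_pos p1). pose proof (Rabs_pos p2). pose proof (Rabs_pos p3). lra. lra.
    pose proof (Rabs_pos d1). pose proof (Rabs_pos d2). pose proof (Rabs_pos d3). unfold Gm. lra. lra. }
  lra.
Qed.
Definition cmp3 (j : nat) (v : V3) : R :=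
  match j with 0 => Defs.c1 v | 1 => Defs.c2 v | _ => Defs.c3 v end.
Lemma comp_lin j : is_linear (U := prod_NormedModule R_AbsRing (prod_NormedModule R_AbsRing R_NormedModule R_NormedModule) R_NormedModule) (V := R_NormedModule) (cmp3 j).
Proof.
  destruct j as [|[|j]]; unfold cmp3, Defs.c1, Defs.c2, Defs.c3.
  - apply (is_linear_comp (fun t => fst t) (fun t => fst t)); [apply is_linear_fst|apply is_linear_fst].
  - apply (is_linear_comp (fun t => fst t) (fun t => snd t)); [apply is_linear_fst|apply is_linear_snd].
  - apply is_linear_snd.
Qed.
Lemma comp_deriv (v dv : R -> V3) T j : is_derive v T (dv T) ->
  is_derive (fun T => cmp3 j (v T)) T (cmp3 j (dv T)).
Proof.
  intro H. unfold is_derive.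
  eapply filterdiff_ext_lin.
  apply (filterdiff_comp v (cmp3 j) _ (cmp3 j) H).
  apply filterdiff_linear. apply comp_lin.
  intro y. simpl. destruct j as [|[|j]]; reflexivity.
Qed.
Lemma isd_eq (f : R -> R) x (l l' : R) : is_derive f x l -> l = l' -> is_derive f x l'.
Proof. intros H E; subst; exact H. Qed.
Lemma isd_mult (f g : R -> R) x df dg : is_derive f x df -> is_derive g x dg ->
  is_derive (fun y => f y * g y) x (df * g x + f x * dg).
Proof. intros H1 H2. apply is_derive_Reals. apply is_derive_Reals in H1. apply is_derive_Reals in H2.
  apply (derivable_pt_lim_mult f g x df dg H1 H2). Qed.
Lemma isd_plus (f g : R -> R) x df dg : is_derive f x df -> is_derive g x dg ->
  is_derive (fun y => f y + g y) x (df + dg).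
Proof. intros H1 H2. apply is_derive_Reals. apply is_derive_Reals in H1. apply is_derive_Reals in H2.
  apply (derivable_pt_lim_plus f g x df dg H1 H2). Qed.
Lemma isd_minus (f g : R -> R) x df dg : is_derive f x df -> is_derive g x dg ->
  is_derive (fun y => f y - g y) x (df - dg).
Proof. intros H1 H2. apply is_derive_Reals. apply is_derive_Reals in H1. apply is_derive_Reals in H2.
  apply (derivable_pt_lim_minus f g x df dg H1 H2). Qed.
Lemma isd_const (c x : R) : is_derive (fun _ => c) x 0.
Proof. apply is_derive_Reals. apply derivable_pt_lim_const. Qed.
Lemma isd_id (x : R) : is_derive (fun y => y) x 1.
Proof. apply is_derive_Reals. apply derivable_pt_lim_id. Qed.
Lemma isd_div (f g : R -> R) x df dg : is_derive f x df -> is_derive g x dg -> g x <> 0 ->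
  is_derive (fun y => f y / g y) x ((df * g x - f x * dg) / (g x)^2).
Proof. intros H1 H2 H3. apply is_derive_Reals. apply is_derive_Reals in H1. apply is_derive_Reals in H2.
  pose proof (derivable_pt_lim_div f g x df dg H1 H2 H3) as H.
  replace ((df * g x - f x * dg) / (g x)^2) with ((df * g x - dg * f x) / Rsqr (g x)) by (unfold Rsqr; field; auto). exact H. Qed.
Lemma isd_comp (f g : R -> R) x df dg : is_derive f (g x) df -> is_derive g x dg ->
  is_derive (fun y => f (g y)) x (df * dg).
Proof. intros H1 H2. apply is_derive_Reals. apply is_derive_Reals in H1. apply is_derive_Reals in H2.
  apply (derivable_pt_lim_comp g f x dg df H2 H1). Qed.
Lemma cmul {U : UniformSpace} (f g : U -> R) x : continuous f x -> continuous g x -> continuous (fun y => f y * g y) x.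
Proof. intros; apply (@continuous_mult U R_AbsRing f g x); auto. Qed.
Lemma cplus {U : UniformSpace} (f g : U -> R) x : continuous f x -> continuous g x -> continuous (fun y => f y + g y) x.
Proof. intros; apply (@continuous_plus U R_AbsRing R_NormedModule f g x); auto. Qed.
Lemma cminus {U : UniformSpace} (f g : U -> R) x : continuous f x -> continuous g x -> continuous (fun y => f y - g y) x.
Proof. intros; apply (@continuous_minus U R_AbsRing R_NormedModule f g x); auto. Qed.
Lemma cinv {U : UniformSpace} (f : U -> R) x : continuous f x -> f x <> 0 -> continuous (fun y => / f y) x.
Proof. intros. apply (continuous_comp f (fun z => / z)); auto. apply continuous_Rinv; auto. Qed.
Lemma cdiv {U : UniformSpace} (f g : U -> R) x : continuous f x -> continuous g x -> g x <> 0 -> continuous (fun y => f y / g y) x.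
Proof. intros. unfold Rdiv. apply cmul; auto. apply cinv; auto. Qed.
Lemma ccomp {U : UniformSpace} (k : U -> R) (phi : R -> R) x : continuous k x -> continuous phi (k x) -> continuous (fun y => phi (k y)) x.
Proof. intros. apply (continuous_comp k phi); auto. Qed.
Lemma ccompV {U : UniformSpace} (k : U -> V3) (phi : V3 -> R) x : continuous k x -> continuous phi (k x) -> continuous (fun y => phi (k y)) x.
Proof. intros. apply (continuous_comp k phi); auto. Qed.
Lemma cpow2 {U : UniformSpace} (f : U -> R) x : continuous f x -> continuous (fun y => f y ^ 2) x.
Proof. intros. apply (continuous_ext (fun y => f y * f y) (fun y => f y ^ 2)). intros; simpl; ring. apply cmul; auto. Qed.
Lemma ccomp3 j (y : V3) : continuous (cmp3 j) y.
Proof.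
  destruct y as [[a b] c]. destruct j as [|[|j]]; unfold cmp3, Defs.c1, Defs.c2, Defs.c3.
  - apply (continuous_comp (fun t : (R*R)*R => fst t) (fun t : R*R => fst t)). apply continuous_fst. apply continuous_fst.
  - apply (continuous_comp (fun t : (R*R)*R => fst t) (fun t : R*R => snd t)). apply continuous_fst. apply continuous_snd.
  - apply continuous_snd.
Qed.


Definition Tau (om : V3) (t : R) (y : V3) : R := t + dot3 om y.
Definition Xp (q : R -> V3) om t y : V3 := sub3 y (q (Tau om t y)).
Definition Wf om (dq : R -> V3) T := 1 - dot3 om (dq T).
Definition Uf j om dq T := cmp3 j (dq T) / Wf om dq T.
Definition dUf j om dq (ddq : R -> V3) T :=
  (cmp3 j (ddq T) * Wf om dq T + cmp3 j (dq T) * dot3 om (ddq T)) / (Wf om dq T)^2.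
Definition Ff (rho : V3 -> R) q dq om t j y := rho (Xp q om t y) * Uf j om dq (Tau om t y).
Definition DF (rho : V3 -> R) q dq ddq om t j (e : V3) y :=
  let X := Xp q om t y in let T := Tau om t y in
  (partial3 0 rho X * (Defs.c1 e - dot3 om e * Defs.c1 (dq T))
   + partial3 1 rho X * (Defs.c2 e - dot3 om e * Defs.c2 (dq T))
   + partial3 2 rho X * (Defs.c3 e - dot3 om e * Defs.c3 (dq T))) * Uf j om dq T
  + rho X * (dot3 om e * dUf j om dq ddq T).

Lemma add3_0 y e : add3 y (scal3 0 e) = y.
Proof. destruct y as [[a b] c]. unfold add3, scal3, mk3, Defs.c1, Defs.c2, Defs.c3; simpl. f_equal; [f_equal|]; ring. Qed.

Lemma isd_ext (f g : R -> R) x l : is_derive f x l -> (forall t, f t = g t) -> is_derive g x l.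
Proof. intros H E. apply (is_derive_ext f g x l E H). Qed.

Lemma Tau_deriv om t y e s : is_derive (fun s => Tau om t (add3 y (scal3 s e))) s (dot3 om e).
Proof.
  apply (isd_ext (fun s => (t + dot3 om y) + s * dot3 om e)).
  2:{ intro u. unfold Tau, dot3, add3, scal3, mk3, Defs.c1, Defs.c2, Defs.c3; simpl. ring. }
  eapply isd_eq. apply isd_plus. apply isd_const. apply isd_mult. apply isd_id. apply isd_const. cbv beta. ring.
Qed.

Lemma Uf_deriv j om (dq ddq : R -> V3) T : (forall T, is_derive dq T (ddq T)) -> Wf om dq T <> 0 ->
  is_derive (Uf j om dq) T (dUf j om dq ddq T).
Proof.
  intros Hd HW. unfold Uf, dUf.
  eapply isd_eq. apply isd_div. apply comp_deriv. apply Hd.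
  unfold Wf, dot3. apply isd_minus. apply isd_const.
  apply isd_plus. apply isd_plus.
  apply isd_mult. apply isd_const. apply (comp_deriv dq ddq T 0). apply Hd.
  apply isd_mult. apply isd_const. apply (comp_deriv dq ddq T 1). apply Hd.
  apply isd_mult. apply isd_const. apply (comp_deriv dq ddq T 2). apply Hd.
  exact HW.
  unfold Wf, dot3 in *. simpl. field. exact HW.
Qed.

Lemma mk3_eta (v : V3) : mk3 (cmp3 0 v) (cmp3 1 v) (cmp3 2 v) = v.
Proof. destruct v as [[a b] c]. reflexivity. Qed.

Lemma Ff_deriv rho q dq ddq om t j y e :
  HDer rho -> (forall i z, (i < 3)%nat -> continuous (partial3 i rho) z) ->
  (forall T, is_derive q T (dq T)) -> (forall T, is_derive dq T (ddq T)) ->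
  (forall T, Wf om dq T <> 0) ->
  is_derive (fun s => Ff rho q dq om t j (add3 y (scal3 s e))) 0 (DF rho q dq ddq om t j e y).
Proof.
  intros HD HC Hq Hdq HW.
  set (TT := fun s => Tau om t (add3 y (scal3 s e))).
  assert (HT : forall s, is_derive TT s (dot3 om e)) by (intro; apply Tau_deriv).
  assert (Hqi : forall i s, is_derive (fun s => cmp3 i (q (TT s))) s (cmp3 i (dq (TT s)) * dot3 om e)).
  { intros i s. apply (isd_comp (fun T => cmp3 i (q T)) TT). apply comp_deriv. apply Hq. apply HT. }
  assert (Hg : forall i, is_derive (fun s => cmp3 i (Xp q om t (add3 y (scal3 s e)))) 0
                   (cmp3 i e - cmp3 i (dq (TT 0)) * dot3 om e)).
  { intro i. apply (isd_ext (fun s => (cmp3 i y + s * cmp3 i e) - cmp3 i (q (TT s)))).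
    - eapply isd_eq. apply isd_minus. apply isd_plus. apply isd_const. apply isd_mult. apply isd_id.
      apply isd_const. apply Hqi. cbv beta. ring.
    - intro s. destruct i as [|[|i]]; reflexivity. }
  unfold Ff. eapply isd_eq.
  apply (isd_mult (fun s => rho (Xp q om t (add3 y (scal3 s e)))) (fun s => Uf j om dq (Tau om t (add3 y (scal3 s e))))).
  - apply (isd_ext (fun s => rho (mk3 (cmp3 0 (Xp q om t (add3 y (scal3 s e))))
       (cmp3 1 (Xp q om t (add3 y (scal3 s e)))) (cmp3 2 (Xp q om t (add3 y (scal3 s e))))))).
    2:{ intro; reflexivity. }
    apply chain3; auto.
  - apply (isd_comp (Uf j om dq) TT). apply Uf_deriv; auto. apply HT.
  - unfold TT. rewrite !add3_0. rewrite mk3_eta. unfold DF. cbv zeta. simpl. ring.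
Qed.

Lemma cconst {U : UniformSpace} (c : R) (x : U) : continuous (fun _ => c) x.
Proof. apply continuous_const. Qed.

Lemma cTau om t y : continuous (Tau om t) y.
Proof.
  apply (continuous_ext (fun y => t + (cmp3 0 om * cmp3 0 y + cmp3 1 om * cmp3 1 y + cmp3 2 om * cmp3 2 y))).
  intro; reflexivity.
  apply cplus. apply cconst. repeat apply cplus; apply cmul; try apply cconst; apply ccomp3.
Qed.

Lemma cqT (v dv : R -> V3) om t i y : (forall T, is_derive v T (dv T)) ->
  continuous (fun y => cmp3 i (v (Tau om t y))) y.
Proof.
  intro H. apply (ccomp (Tau om t) (fun T => cmp3 i (v T))). apply cTau.
  apply (@ex_derive_continuous R_AbsRing R_NormedModule (fun T => cmp3 i (v T))). eexists. apply comp_deriv. apply H.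
Qed.

Lemma cXp (q dq : R -> V3) om t y : (forall T, is_derive q T (dq T)) -> continuous (Xp q om t) y.
Proof.
  intro H. apply (continuous_ext (fun y => mk3 (cmp3 0 y - cmp3 0 (q (Tau om t y)))
     (cmp3 1 y - cmp3 1 (q (Tau om t y))) (cmp3 2 y - cmp3 2 (q (Tau om t y))))).
  intro; reflexivity.
  apply cont_mk3; apply cminus; try apply ccomp3; apply (cqT q dq); auto.
Qed.

Lemma cdotT (v dv : R -> V3) om t y : (forall T, is_derive v T (dv T)) ->
  continuous (fun y => dot3 om (v (Tau om t y))) y.
Proof.
  intro H. apply (continuous_ext (fun y => cmp3 0 om * cmp3 0 (v (Tau om t y)) + cmp3 1 om * cmp3 1 (v (Tau om t y))
     + cmp3 2 om * cmp3 2 (v (Tau om t y)))).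
  intro; reflexivity.
  repeat apply cplus; apply cmul; try apply cconst; apply (cqT v dv); auto.
Qed.

Lemma cWf (dq ddq : R -> V3) om t y : (forall T, is_derive dq T (ddq T)) ->
  continuous (fun y => Wf om dq (Tau om t y)) y.
Proof. intro H. unfold Wf. apply cminus. apply cconst. apply (cdotT dq ddq); auto. Qed.

Lemma cUf (dq ddq : R -> V3) om t j y : (forall T, is_derive dq T (ddq T)) ->
  (forall T, Wf om dq T <> 0) -> continuous (fun y => Uf j om dq (Tau om t y)) y.
Proof.
  intros H HW. unfold Uf. apply cdiv. apply (cqT dq ddq); auto.
  apply (cWf dq ddq); auto. apply HW.
Qed.

Lemma cdUf (dq ddq dddq : R -> V3) om t j y : (forall T, is_derive dq T (ddq T)) ->
  (forall T, is_derive ddq T (dddq T)) ->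
  (forall T, Wf om dq T <> 0) -> continuous (fun y => dUf j om dq ddq (Tau om t y)) y.
Proof.
  intros H H2 HW. unfold dUf. apply cdiv.
  apply cplus; apply cmul. apply (cqT ddq dddq); auto. apply (cWf dq ddq); auto.
  apply (cqT dq ddq); auto. apply (cdotT ddq dddq); auto.
  apply cpow2. apply (cWf dq ddq); auto.
  apply pow_nonzero. apply HW.
Qed.

Lemma cFf rho (q dq ddq : R -> V3) om t j : cont3 rho ->
  (forall T, is_derive q T (dq T)) -> (forall T, is_derive dq T (ddq T)) ->
  (forall T, Wf om dq T <> 0) -> cont3 (Ff rho q dq om t j).
Proof.
  intros Hr Hq Hdq HW y. unfold Ff. apply cmul.
  apply (ccompV (Xp q om t) rho). apply (cXp q dq); auto. apply Hr.
  apply (cUf dq ddq); auto.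
Qed.

Lemma cDF rho (q dq ddq dddq : R -> V3) om t j e : cont3 rho ->
  (forall i z, (i < 3)%nat -> continuous (partial3 i rho) z) ->
  (forall T, is_derive q T (dq T)) -> (forall T, is_derive dq T (ddq T)) ->
  (forall T, is_derive ddq T (dddq T)) ->
  (forall T, Wf om dq T <> 0) -> cont3 (DF rho q dq ddq om t j e).
Proof.
  intros Hr HC Hq Hdq Hddq HW y. unfold DF. cbv zeta.
  assert (HP : forall i, (i < 3)%nat -> continuous (fun y => partial3 i rho (Xp q om t y)) y).
  { intros i Hi. apply (ccompV (Xp q om t) (partial3 i rho)). apply (cXp q dq); auto. apply HC; auto. }
  apply cplus. apply cmul.
  - apply cplus. apply cplus.
    + apply cmul. apply HP; auto. apply cminus. apply cconst. apply cmul. apply cconst.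
      apply (cqT dq ddq om t 0%nat); auto.
    + apply cmul. apply HP; auto. apply cminus. apply cconst. apply cmul. apply cconst.
      apply (cqT dq ddq om t 1%nat); auto.
    + apply cmul. apply HP; auto. apply cminus. apply cconst. apply cmul. apply cconst.
      apply (cqT dq ddq om t 2%nat); auto.
  - apply (cUf dq ddq); auto.
  - apply cmul. apply (ccompV (Xp q om t) rho). apply (cXp q dq); auto. apply Hr.
    apply cmul. apply cconst. apply (cdUf dq ddq dddq); auto.
Qed.

Lemma abs_cmp_norm i v : Rabs (cmp3 i v) <= norm3 v.
Proof.
  unfold norm3, dot3. rewrite <- sqrt_Rsqr_abs. apply sqrt_le_1_alt.
  destruct v as [[a b] c]. unfold Rsqr.
  destruct i as [|[|i]]; simpl; unfold Defs.c1, Defs.c2, Defs.c3; simpl; nra.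
Qed.

Lemma abs_shift u v K : K + 1 <= Rabs u -> Rabs v < 1 -> K <= Rabs (u + v).
Proof. intros. unfold Rabs in *; repeat destruct Rcase_abs; lra. Qed.

Lemma partial_zero (f : V3 -> R) K :
  (forall z, K <= Rabs (cmp3 0 z) \/ K <= Rabs (cmp3 1 z) \/ K <= Rabs (cmp3 2 z) -> f z = 0) ->
  forall x k, (K + 1 <= Rabs (cmp3 0 x) \/ K + 1 <= Rabs (cmp3 1 x) \/ K + 1 <= Rabs (cmp3 2 x)) ->
  partial3 k f x = 0.
Proof.
  intros Hz x k Hx. unfold partial3.
  rewrite (Derive_ext_loc _ (fun _ => 0)). apply Derive_const.
  exists (mkposreal 1 Rlt_0_1). intros s Hs. apply ball_R in Hs. simpl in Hs.
  change (Rabs (s - 0) < 1) in Hs. rewrite Rminus_0_r in Hs.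
  apply Hz.
  assert (Hb : forall b, b = 0 \/ b = 1 -> Rabs (s * b) < 1).
  { intros b [-> | ->]. rewrite Rmult_0_r, Rabs_R0; lra. rewrite Rmult_1_r; auto. }
  destruct x as [[a b] c].
  destruct k as [|[|k]]; simpl; unfold Defs.c1, Defs.c2, Defs.c3 in *; simpl in *;
  (destruct Hx as [H|[H|H]]; [left|right;left|right;right]; apply abs_shift; auto).
  all: apply Hb; cbn; auto.
Qed.

Lemma supp_gen (rho : V3 -> R) (q : R -> V3) om t Rr M (G : V3 -> R) :
  (forall z, Rr <= Rabs (cmp3 0 z) \/ Rr <= Rabs (cmp3 1 z) \/ Rr <= Rabs (cmp3 2 z) -> rho z = 0) ->
  (forall T i, Rabs (cmp3 i (q T)) <= M) ->
  (forall y, rho (Xp q om t y) = 0 -> (forall k, partial3 k rho (Xp q om t y) = 0) -> G y = 0) ->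
  box_supp (Rr + 1 + M) G.
Proof.
  intros Hr HM HG a b c Habc. apply HG.
  - apply Hr. unfold Xp, sub3. simpl.
    assert (forall u v, Rr + 1 + M <= Rabs u -> Rabs v <= M -> Rr <= Rabs (u - v)).
    { intros u v H1 H2. unfold Rabs in *; repeat destruct Rcase_abs; lra. }
    destruct Habc as [Ha|[Ha|Ha]]; [left|right;left|right;right]; apply H; auto; apply (HM _ 0%nat) || apply (HM _ 1%nat) || apply (HM _ 2%nat).
  - intro k. apply (partial_zero rho Rr Hr). unfold Xp, sub3. simpl.
    assert (forall u v, Rr + 1 + M <= Rabs u -> Rabs v <= M -> Rr + 1 <= Rabs (u - v)).
    { intros u v H1 H2. unfold Rabs in *; repeat destruct Rcase_abs; lra. }
    destruct Habc as [Ha|[Ha|Ha]]; [left|right;left|right;right]; apply H; auto; apply (HM _ 0%nat) || apply (HM _ 1%nat) || apply (HM _ 2%nat).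
Qed.


Lemma norm3_pos v : 0 <= norm3 v.
Proof. apply sqrt_pos. Qed.

Lemma qbar1_bound (dq : R -> V3) M : (forall t, norm3 (dq t) <= M) ->
  (forall t, norm3 (dq t) <= qbar1 dq) /\ 0 <= qbar1 dq.
Proof.
  intro HM. unfold qbar1.
  destruct (Lub_Rbar_correct (fun r => exists t, r = norm3 (dq t))) as [Hub Hlub].
  destruct (Lub_Rbar (fun r => exists t, r = norm3 (dq t))) as [r| |] eqn:E.
  - simpl. assert (Hr : forall t, norm3 (dq t) <= r).
    { intro t. specialize (Hub (norm3 (dq t)) (ex_intro _ t eq_refl)). exact Hub. }
    split; auto. eapply Rle_trans. apply (norm3_pos (dq 0)). apply Hr.
  - exfalso. specialize (Hlub (Finite M)). simpl in Hlub. apply Hlub.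
    intros x [t ->]. simpl. apply HM.
  - exfalso. specialize (Hub (norm3 (dq 0)) (ex_intro _ 0 eq_refl)). exact Hub.
Qed.

Lemma dot_lt1 (om v : V3) qb eps :
  norm3 om = 1 -> Defs.c3 v = 0 -> norm3 v <= qb -> 0 <= qb ->
  (1 <= qb -> 0 < eps < 1 - sqrt (1 - / (qb ^ 2))) ->
  Theta qb eps <= Rabs (Defs.c3 om) ->
  Rabs (dot3 om v) < 1.
Proof.
  intros Hom Hv3 Hn Hqb Heps Hth.
  destruct om as [[w1 w2] w3]. destruct v as [[d1 d2] d3].
  unfold norm3, dot3, Defs.c1, Defs.c2, Defs.c3 in *; simpl in *. subst d3.
  assert (Hw : w1 * w1 + w2 * w2 + w3 * w3 = 1).
  { assert (0 <= w1 * w1 + w2 * w2 + w3 * w3) by nra.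
    rewrite <- (sqrt_sqrt (w1 * w1 + w2 * w2 + w3 * w3)) by auto. rewrite Hom. ring. }
  assert (Hn2 : d1 * d1 + d2 * d2 <= qb * qb).
  { assert (HS : 0 <= d1 * d1 + d2 * d2 + 0 * 0) by nra.
    pose proof (sqrt_sqrt _ HS) as ES.
    pose proof (sqrt_pos (d1 * d1 + d2 * d2 + 0 * 0)) as HP.
    set (r := sqrt (d1 * d1 + d2 * d2 + 0 * 0)) in *.
    assert (r * r <= qb * qb) by (apply Rmult_le_compat; lra). lra. }
  assert (CS : (w1 * d1 + w2 * d2 + w3 * 0) ^ 2 <= (1 - w3 * w3) * (d1 * d1 + d2 * d2)).
  { replace (1 - w3 * w3) with (w1 * w1 + w2 * w2) by lra. pose proof (pow2_ge_0 (w1 * d2 - w2 * d1)). nra. }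
  assert (Hkey : (1 - w3 * w3) * (qb * qb) < 1).
  { unfold Theta in Hth. destruct (Rlt_dec qb 1) as [Hl|Hl].
    - assert (0 <= w3 * w3) by nra. nra.
    - assert (H1 : 1 <= qb) by lra. specialize (Heps H1).
      set (s := sqrt (1 - / (qb ^ 2))) in *.
      assert (Hq2 : 0 < qb ^ 2) by nra.
      assert (Hinv : / (qb ^ 2) <= 1).
      { rewrite <- Rinv_1. apply Rinv_le_contravar; nra. }
      assert (Hs2 : s * s = 1 - / (qb ^ 2)).
      { unfold s. apply sqrt_sqrt. lra. }
      assert (Hs0 : 0 <= s) by apply sqrt_pos.
      assert (Hs3 : s < Rabs w3) by lra.
      assert (Hw3 : s * s < w3 * w3).
      { assert (Habs : Rabs w3 * Rabs w3 = w3 * w3).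
        { rewrite <- Rabs_mult. apply Rabs_right. nra. }
        rewrite <- Habs. nra. }
      assert (E : (1 - w3 * w3) * (qb * qb) < / (qb ^ 2) * (qb ^ 2)) by nra.
      rewrite Rinv_l in E by lra. exact E. }
  assert (Hsq : (w1 * d1 + w2 * d2 + w3 * 0) ^ 2 < 1).
  { assert (0 <= 1 - w3 * w3) by nra. nra. }
  apply Rabs_def1; nra.
Qed.

Lemma slot0 (F : V3 -> R) a b c l : is_derive (fun s => F (add3 (mk3 a b c) (scal3 s (basis3 0)))) 0 l ->
  is_derive (fun s => F (mk3 s b c)) a l.
Proof.
  intro H. apply (shift_deriv _ _ a l H). intro u. f_equal.
  unfold add3, scal3, basis3, mk3, Defs.c1, Defs.c2, Defs.c3; simpl. f_equal; [f_equal|]; ring.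
Qed.
Lemma slot1 (F : V3 -> R) a b c l : is_derive (fun s => F (add3 (mk3 a b c) (scal3 s (basis3 1)))) 0 l ->
  is_derive (fun s => F (mk3 a s c)) b l.
Proof.
  intro H. apply (shift_deriv _ _ b l H). intro u. f_equal.
  unfold add3, scal3, basis3, mk3, Defs.c1, Defs.c2, Defs.c3; simpl. f_equal; [f_equal|]; ring.
Qed.
Lemma slot2 (F : V3 -> R) a b c l : is_derive (fun s => F (add3 (mk3 a b c) (scal3 s (basis3 2)))) 0 l ->
  is_derive (fun s => F (mk3 a b s)) c l.
Proof.
  intro H. apply (shift_deriv _ _ c l H). intro u. f_equal.
  unfold add3, scal3, basis3, mk3, Defs.c1, Defs.c2, Defs.c3; simpl. f_equal; [f_equal|]; ring.
Qed.

Lemma dot_grad (f : V3 -> R) x v : dot3 (grad3 f x) v =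
  partial3 0 f x * Defs.c1 v + partial3 1 f x * Defs.c2 v + partial3 2 f x * Defs.c3 v.
Proof. reflexivity. Qed.

Theorem lemma3p2
  (rho : V3 -> R) (R_rho : R)
  (Hrho_smooth : smooth3 rho)
  (Hrho_radial : radial3 rho)
  (HR_rho : 0 < R_rho)
  (Hrho_supp : forall x, R_rho <= norm3 x -> rho x = 0)
  (q dq ddq dddq : R -> V3)
  (Hdq : forall t, is_derive q t (dq t))
  (Hddq : forall t, is_derive dq t (ddq t))
  (Hdddq : forall t, is_derive ddq t (dddq t))
  (Hbound : exists M, forall t,
      norm3 (q t) <= M /\ norm3 (dq t) <= M /\
      norm3 (ddq t) <= M /\ norm3 (dddq t) <= M)
  (Hq3 : forall t, c3 (q t) = 0)
  (eps : R)
  (Heps : 1 <= qbar1 dq -> 0 < eps < 1 - sqrt (1 - / (qbar1 dq ^ 2)))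
  (omega : V3)
  (Homega : norm3 omega = 1)
  (Htheta : Theta (qbar1 dq) eps <= Rabs (c3 omega))
  (t : R) :
  pibar rho q dq omega t =
  / (4 * PI) *
  int3 (fun y => let tau := t + dot3 omega y in
                 rho (sub3 y (q tau)) * dot3 omega (ddq tau)
                 / (1 - dot3 omega (dq tau)) ^ 2).
Proof.
  destruct Hbound as [M HM].
  assert (HM0 : 0 <= M). { destruct (HM 0) as [H _]. eapply Rle_trans. apply norm3_pos. exact H. }
  destruct (qbar1_bound dq M) as [Hqb Hqb0]. intro; apply HM.
  assert (Hdq3 : forall T, Defs.c3 (dq T) = 0).
  { intro T. pose proof (comp_deriv q dq T 2 (Hdq T)) as H.
    apply is_derive_unique in H. change (cmp3 2 (dq T) = 0). rewrite <- H.
    rewrite (Derive_ext _ (fun _ => 0)). apply Derive_const. intro; apply Hq3. }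
  assert (HW : forall T, Wf omega dq T <> 0).
  { intro T. unfold Wf. pose proof (dot_lt1 omega (dq T) (qbar1 dq) eps) as H.
    specialize (H Homega). specialize (H (Hdq3 T)). specialize (H (Hqb T) Hqb0).
    specialize (H Heps). specialize (H Htheta).
    apply Rabs_def2 in H. lra. }
  destruct (Hrho_smooth 2%nat) as [Hr Hi]. cbn [Ck3] in Hi.
  assert (HD : HDer rho). { intros z i Hi3. destruct (Hi i Hi3) as [H1 _]. exact (H1 z). }
  assert (HC : forall i z, (i < 3)%nat -> continuous (partial3 i rho) z).
  { intros i z Hi3. destruct (Hi i Hi3) as [_ [H2 _]]. exact (H2 z). }
  assert (Hrc : cont3 rho) by exact Hr.
  assert (Hrz : forall z, R_rho <= Rabs (cmp3 0 z) \/ R_rho <= Rabs (cmp3 1 z) \/ R_rho <= Rabs (cmp3 2 z) -> rho z = 0).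
  { intros z Hz. apply Hrho_supp. destruct Hz as [H|[H|H]]; eapply Rle_trans; try exact H; apply abs_cmp_norm. }
  assert (HMq : forall T i, Rabs (cmp3 i (q T)) <= M).
  { intros T i. eapply Rle_trans. apply abs_cmp_norm. apply HM. }
  set (L := R_rho + 1 + M).
  assert (HL : 0 <= L) by (unfold L; lra).
  set (A := fun y => let tau := t + dot3 omega y in dot3 (grad3 rho (sub3 y (q tau))) (dq tau)).
  set (B := fun y => let tau := t + dot3 omega y in
                 rho (sub3 y (q tau)) * dot3 omega (ddq tau) / (1 - dot3 omega (dq tau)) ^ 2).
  set (D := fun j y => DF rho q dq ddq omega t j (basis3 j) y).
  set (Fj := fun j y => Ff rho q dq omega t j y).
  assert (HcD : forall j, cont3 (D j)).
  { intro j. apply (cDF rho q dq ddq dddq); auto. }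
  assert (HcF : forall j, cont3 (Fj j)).
  { intro j. apply (cFf rho q dq ddq); auto. }
  assert (HsF : forall j, box_supp L (Fj j)).
  { intro j. apply (supp_gen rho q omega t R_rho M); auto. intros y H0 _. unfold Fj, Ff. rewrite H0. ring. }
  assert (HcA : cont3 A).
  { intro y. unfold A. cbv zeta. unfold dot3 at 1. unfold grad3.
    apply (continuous_ext (fun y => partial3 0 rho (Xp q omega t y) * cmp3 0 (dq (Tau omega t y))
       + partial3 1 rho (Xp q omega t y) * cmp3 1 (dq (Tau omega t y))
       + partial3 2 rho (Xp q omega t y) * cmp3 2 (dq (Tau omega t y)))).
    intro; reflexivity.
    repeat apply cplus; apply cmul; try (apply (ccompV (Xp q omega t)); [apply (cXp q dq); auto | apply HC; auto]);
      apply (cqT dq ddq); auto. }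
  assert (HcB : cont3 B).
  { intro y. unfold B. cbv zeta.
    apply (continuous_ext (fun y => rho (Xp q omega t y) * dot3 omega (ddq (Tau omega t y)) / (Wf omega dq (Tau omega t y)) ^ 2)).
    intro; reflexivity.
    apply cdiv. apply cmul. apply (ccompV (Xp q omega t)). apply (cXp q dq); auto. apply Hr.
    apply (cdotT ddq dddq); auto. apply cpow2. apply (cWf dq ddq); auto. apply pow_nonzero; auto. }
  assert (HsA : box_supp L A).
  { apply (supp_gen rho q omega t R_rho M); auto. intros y _ H0. unfold A. cbv zeta.
    change (sub3 y (q (t + dot3 omega y))) with (Xp q omega t y). rewrite dot_grad. rewrite !H0. ring. }
  assert (HsB : box_supp L B).
  { apply (supp_gen rho q omega t R_rho M); auto. intros y H0 _. unfold B. cbv zeta.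
    change (sub3 y (q (t + dot3 omega y))) with (Xp q omega t y). rewrite H0. unfold Rdiv. ring. }
  assert (Hpt : forall y, A y + B y = D 0%nat y + D 1%nat y + D 2%nat y).
  { intro y. unfold A, B, D. cbv zeta.
    change (sub3 y (q (t + dot3 omega y))) with (Xp q omega t y).
    change (t + dot3 omega y) with (Tau omega t y).
    rewrite dot_grad. unfold DF. cbv zeta. unfold Uf, dUf, Wf.
    pose proof (HW (Tau omega t y)) as HWy. unfold Wf in HWy.
    set (X := Xp q omega t y) in *. set (T := Tau omega t y) in *.
    set (p0 := partial3 0 rho X). set (p1 := partial3 1 rho X). set (p2 := partial3 2 rho X).
    set (r := rho X).
    unfold dot3 in *.
    change (cmp3 0 (dq T)) with (Defs.c1 (dq T)). change (cmp3 1 (dq T)) with (Defs.c2 (dq T)).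
    change (cmp3 2 (dq T)) with (Defs.c3 (dq T)).
    change (cmp3 0 (ddq T)) with (Defs.c1 (ddq T)). change (cmp3 1 (ddq T)) with (Defs.c2 (ddq T)).
    change (cmp3 2 (ddq T)) with (Defs.c3 (ddq T)).
    set (d1 := Defs.c1 (dq T)) in *. set (d2 := Defs.c2 (dq T)) in *. set (d3 := Defs.c3 (dq T)) in *.
    set (a1 := Defs.c1 (ddq T)) in *. set (a2 := Defs.c2 (ddq T)) in *. set (a3 := Defs.c3 (ddq T)) in *.
    set (w1 := Defs.c1 omega) in *. set (w2 := Defs.c2 omega) in *. set (w3 := Defs.c3 omega) in *.
    cbn [basis3 mk3 Defs.c1 Defs.c2 Defs.c3 fst snd].
    field. exact HWy. }
  assert (Hsum : I3 L A + I3 L B = 0).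
  { rewrite <- I3_plus; auto.
    replace (fun y => A y + B y) with (fun y => (fun y => D 0%nat y + D 1%nat y) y + D 2%nat y).
    2:{ apply functional_extensionality. intro y. rewrite Hpt. reflexivity. }
    rewrite I3_plus; auto. 2:{ intro y. apply cplus; apply HcD. }
    rewrite I3_plus; auto.
    rewrite (div_a L (Fj 0%nat) (D 0%nat)); auto.
    rewrite (div_b L (Fj 1%nat) (D 1%nat)); auto.
    rewrite (div_c L (Fj 2%nat) (D 2%nat)); auto. ring.
    - intros a b c. apply slot2. apply Ff_deriv; auto.
    - intros a b c. apply slot1. apply Ff_deriv; auto.
    - intros a b c. apply slot0. apply Ff_deriv; auto. }
  unfold pibar. fold A. fold B.
  rewrite (int3_I3 L A), (int3_I3 L B); auto.
  replace (I3 L A) with (- I3 L B) by lra. ring.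
Qed.
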